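(* Let $\alpha\in(0,1)$, $\gamma,\beta>0$, $\lambda=\beta+\gamma$, $r_0>0$, $Y=B(0,r_0)\subset\mathbb R\oplus\mathbb R^{d-1}$, and $\mathcal X(x)=\|x\|^\alpha Ax$ with $A=\gamma\,\mathrm{Id}_{\mathbb R}\oplus(-\beta\,\mathrm{Id}_{\mathbb R^{d-1}})$, with flow $\varphi_t$. Let $x(t)$ be a trajectory in $Y$ for $t\in[0,T_0]$ and $\theta(t)$ its angle with $\mathbb R\times\{0\}$. Let $v(t)=D\varphi_t(x(0))v(0)$ be a flow-invariant family of tangent vectors along $x$, write $v=v_u+v_s$ with $v_u\in\mathbb R\times\{0\}$, $v_s\in\{0\}\times\mathbb R^{d-1}$, and let $\rho(t)$ be the angle between $v(t)$ and $\mathbb R\times\{0\}$, $\tan\rho=\|v_s\|/\|v_u\|$. Then for $t\in[0,T_0]$, if $\tan\rho(t)\le1$, $$(\tan\rho)'\le-\lambda\|x\|^\alpha\tan\rho+\alpha\lambda\|x\|^\alpha\frac{\tan\theta}{1+\tan^2\theta}.$$ *)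

(* Defs.v *)
From HB Require Import structures.
From mathcomp Require Import all_boot all_order all_algebra.
From mathcomp Require Import all_classical all_reals all_analysis.
Set Implicit Arguments. Unset Strict Implicit. Unset Printing Implicit Defensive.
Import Order.TTheory GRing.Theory Num.Theory.
Import numFieldNormedType.Exports.
Local Open Scope ring_scope.

(* Points of R^d = R (+) R^(d-1) with d = n.+1 are row vectors 'rV[R]_n.+1;
   coordinate ord0 is the R-factor (unstable direction), the coordinates
   lift ord0 i (i : 'I_n) form the R^(d-1)-factor (stable directions). *)
Section Defs.
Variables (R : realType) (n : nat).

Definition enorm (x : 'rV[R]_n.+1) : R := Num.sqrt (\sum_i x ord0 i ^+ 2).

Definition ucomp (x : 'rV[R]_n.+1) : R := x ord0 ord0.

Definition snorm (x : 'rV[R]_n.+1) : R :=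
  Num.sqrt (\sum_(i < n) x ord0 (lift ord0 i) ^+ 2).

Definition tan_ang (x : 'rV[R]_n.+1) : R := snorm x / `|ucomp x|.

Definition Amx (ga be : R) : 'M[R]_n.+1 :=
  diag_mx (\row_(i < n.+1) (if i == ord0 then ga else - be)).

Definition vfield (al ga be : R) (x : 'rV[R]_n.+1) : 'rV[R]_n.+1 :=
  (enorm x `^ al) *: (x *m Amx ga be).

End Defs.

(* Main.v *)
Require Import Defs.
From HB Require Import structures.
From mathcomp Require Import all_boot all_order all_algebra.
From mathcomp Require Import all_classical all_reals all_analysis.
From mathcomp Require Import ring lra.
Import Order.TTheory GRing.Theory Num.Theory.
Import numFieldNormedType.Exports.
Local Open Scope ring_scope.

Local Open Scope classical_set_scope.

Lemma is_derive_coord (R : realType) m (f : R -> 'rV[R]_m) (t : R) (D : 'rV[R]_m) (j : 'I_m) :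
  is_derive t 1 f D -> is_derive t 1 (fun s => f s ord0 j) (D ord0 j).
Proof.
move=> [df dv].
have hq : (fun h : R => h^-1 *: ((f \o shift t) (h *: 1) - f t)) @ 0^' --> D.
  by rewrite -dv; exact: df.
have hq2 : (fun h : R => (h^-1 *: ((f \o shift t) (h *: 1) - f t)) ord0 j) @ 0^' --> D ord0 j.
  have := continuous_cvg _ (@coord_continuous R 1 m ord0 j D) hq. by apply; exact: Proper_dnbhs_numFieldType.
have E : (fun h : R => h^-1 *: (((fun s => f s ord0 j) \o shift t) (h *: 1) - f t ord0 j))
   = (fun h : R => (h^-1 *: ((f \o shift t) (h *: 1) - f t)) ord0 j).
  by apply/funext => h; rewrite !mxE.
split; first by rewrite /derivable E; apply/cvg_ex; exists (D ord0 j).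
by rewrite /derive E; apply: cvg_lim.
Qed.
Lemma is_derive_scalel (R : realType) (W : normedModType R) (k : R -> R) (c : W) (x d : R) :
  is_derive x 1 k d -> is_derive x 1 (fun h => k h *: c) (d *: c).
Proof.
move=> [dk vk].
have dk' : differentiable k x by apply/derivable1_diffP.
have dg : differentiable (fun h => k h *: c) x by apply: differentiableZl.
split; first exact: diff_derivable.
rewrite deriveE // diffZl // -deriveE //.
by rewrite vk.
Qed.

Lemma derive_dir (R : realType) m (f : 'rV[R]_m -> 'rV[R]_m) (a w : 'rV[R]_m) :
  'D_w f a = 'D_1 (fun h : R => f (h *: w + a)) 0.
Proof.
rewrite /derive; set g1 := fun h => h^-1 *: _; set g2 := fun h => h^-1 *: _.
suff -> : g1 = g2 by [].
by apply/funext => h; rewrite /g1 /g2 /= addr0 scale0r add0r [h%:A]mulr1.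
Qed.

Lemma is_derive_lin (R : realType) m (a w : 'rV[R]_m) (x : R) :
  is_derive x 1 (fun h : R => h *: w + a) w.
Proof.
have := is_deriveD (@is_derive_scalel _ _ _ w _ _ (is_derive_id x 1)) (is_derive_cst a x 1).
rewrite scale1r addr0.
by have -> : ((fun h : R => id h *: w) + cst a) = (fun h : R => h *: w + a) by apply/funext.
Qed.

Lemma is_derive_psi (R : realType) n (al : R) (a w : 'rV[R]_n.+1) : 0 < enorm a ->
  is_derive (0:R) 1 (fun h : R => enorm (h *: w + a) `^ al)
    (al * enorm a `^ (al - 1) * ((2 * enorm a)^-1 * \sum_i (2 * a ord0 i * w ord0 i))).
Proof.
move=> ea.
have hc i : is_derive (0:R) 1 (fun h : R => (h *: w + a) ord0 i) (w ord0 i).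
  exact: (@is_derive_coord R n.+1 (fun h : R => h *: w + a) 0 w i (@is_derive_lin _ _ a w 0)).
have hs : is_derive (0:R) 1 (fun h : R => \sum_i (h *: w + a) ord0 i ^+ 2)
    (\sum_i 2 * a ord0 i * w ord0 i).
  have := is_derive_sum (fun i => is_deriveX 2 (hc i)).
  rewrite fct_sumE => H; apply: (is_derive_eq H); apply: eq_bigr => i _.
  by rewrite scale0r add0r expr1.
have s0 : \sum_i (0 *: w + a) ord0 i ^+ 2 = enorm a ^+ 2.
  by rewrite scale0r add0r /enorm sqr_sqrtr // sumr_ge0 // => i _; exact: sqr_ge0.
have spos : 0 < \sum_i (0 *: w + a) ord0 i ^+ 2 by rewrite s0 exprn_gt0.
have hsq := is_derive1_comp (is_derive1_sqrt spos) hs.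
have hp := is_derive1_comp (@is_derive1_powR R al _ _) hsq.
have e0 : Num.sqrt (\sum_i (0 *: w + a) ord0 i ^+ 2) = enorm a.
  by rewrite scale0r add0r.
move: hp; rewrite /comp e0 => /(_ ea) hp.
exact: hp.
Qed.

Lemma D_vfield (R : realType) n (al ga be : R) (a w : 'rV[R]_n.+1) : 0 < enorm a ->
  'D_w (vfield al ga be) a =
  (al * enorm a `^ (al - 1) * ((2 * enorm a)^-1 * \sum_i (2 * a ord0 i * w ord0 i)))
    *: (a *m Amx n ga be) + enorm a `^ al *: (w *m Amx n ga be).
Proof.
move=> ea; rewrite derive_dir.
set c := (al * _ * _).
set psi := (fun h : R => enorm (h *: w + a) `^ al).
have hpsi : is_derive (0:R) 1 psi c by exact: is_derive_psi.
have hpsih : is_derive (0:R) 1 (psi * id) (psi 0).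
  have := is_deriveM hpsi (is_derive_id (0:R) 1).
  by rewrite scale0r addr0 [_%:A]mulr1.
have E : (fun h : R => vfield al ga be (h *: w + a)) =
    (fun h => psi h *: (a *m Amx n ga be)) + (fun h => (psi * id) h *: (w *m Amx n ga be)).
  apply/funext => h; rewrite /vfield /= -/(psi h).
  by rewrite mulmxDl scalerDr -scalemxAl scalerA addrC.
have -> : 'D_1 (fun h : R => vfield al ga be (h *: w + a)) 0 =
   'D_1 ((fun h => psi h *: (a *m Amx n ga be)) + (fun h => (psi * id) h *: (w *m Amx n ga be))) 0.
  by rewrite -E.
have := is_deriveD (@is_derive_scalel _ _ _ (a *m Amx n ga be) _ _ hpsi)
  (@is_derive_scalel _ _ _ (w *m Amx n ga be) _ _ hpsih).
move=> H; rewrite (@derive_val _ _ _ _ _ _ _ H).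
by rewrite /psi scale0r add0r.
Qed.

Lemma is_derive_sqrt_comp (R : realType) (f : R -> R) (t d : R) :
  is_derive t 1 f d -> 0 < f t ->
  is_derive t 1 (fun s => Num.sqrt (f s)) ((2 * Num.sqrt (f t))^-1 * d).
Proof. by move=> hf hp; exact: (is_derive1_comp (is_derive1_sqrt hp) hf). Qed.

Lemma AmxE (R : realType) n (ga be : R) (y : 'rV[R]_n.+1) j :
  (y *m Amx n ga be) ord0 j = y ord0 j * (if j == ord0 then ga else - be).
Proof. by rewrite /Amx mul_mx_diag !mxE. Qed.

Lemma sum_sq_derive (R : realType) m (g : 'I_m -> R -> R) (dg : 'I_m -> R) (t : R) :
  (forall i, is_derive t 1 (g i) (dg i)) ->
  is_derive t 1 (fun s => \sum_i g i s ^+ 2) (\sum_i 2 * g i t * dg i).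
Proof.
move=> hg.
have := is_derive_sum (fun i => is_deriveX 2 (hg i)).
rewrite fct_sumE => H; apply: (is_derive_eq H); apply: eq_bigr => i _.
by rewrite expr1.
Qed.

Lemma deriv_min_le0 (R : realType) (f : R -> R) (c D : R) :
  is_derive c 1 f D -> (forall s, f c <= f s) -> D <= 0.
Proof.
move=> [df <-] cmin.
rewrite ['D_1 f c]cvg_at_leftE //.
apply: limr_le.
  rewrite -(cvg_at_leftE (fun h => h^-1 *: ((f \o shift c) _ - f c))) //.
  apply: cvg_trans df; apply: cvg_app.
  move=> A [e egt0 Ae]; exists e => // x xe xgt0; apply: Ae => //.
  exact/ltr0_neq0.
near=> h; apply: mulr_le0_ge0.
  by rewrite invr_le0; apply: ltW; near: h; exists 1 => /=.
by rewrite subr_ge0 cmin.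
Unshelve. all: by end_near. Qed.

Lemma sq_derive (R : realType) (f : R -> R) (t d : R) :
  is_derive t 1 f d -> is_derive t 1 (fun s => f s ^+ 2) (2 * f t * d).
Proof.
move=> hf; have := is_deriveX 2 hf => H; apply: (is_derive_eq H).
by rewrite expr1.
Qed.

Local Close Scope classical_set_scope.

Lemma poly_ineq (R : realType) (a0 w0 P A W Sa Sw be ga : R) :
  0 < W -> 0 < Sw -> Sw <= W -> 0 <= A -> 0 <= Sa ->
  w0 ^+ 2 = W ^+ 2 -> a0 ^+ 2 = A ^+ 2 -> P ^+ 2 <= Sa ^+ 2 * Sw ^+ 2 ->
  0 < be -> 0 < ga ->
  - ((a0 * w0 + P) * (ga * Sw ^+ 2 * a0 * w0 + be * P * W ^+ 2))
    <= (be + ga) * Sa * A * W ^+ 3 * Sw.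
Proof.
move=> W0 S0 SW A0 Sa0 hw ha hP hb hg.
have y0 : 0 <= A * W * Sa * Sw by rewrite !mulr_ge0 // ltW.
have hx : (a0 * w0 * P) ^+ 2 <= (A * W * Sa * Sw) ^+ 2.
  rewrite !exprMn ha hw.
  have q : 0 <= A ^+ 2 * W ^+ 2 by rewrite mulr_ge0 ?sqr_ge0.
  have := ler_wpM2l q hP; rewrite !mulrA => h; exact: h.
have h1 : - (a0 * w0 * P) <= A * W * Sa * Sw.
  have : `|a0 * w0 * P| <= A * W * Sa * Sw.
    by rewrite -(ger0_norm y0); rewrite -ler_sqr ?nnegrE // !real_normK ?num_real //.
  by case/ler_normlP.
have h2 : Sw ^+ 2 <= W ^+ 2 by nra.
have E : - ((a0 * w0 + P) * (ga * Sw ^+ 2 * a0 * w0 + be * P * W ^+ 2)) =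
   - (ga * Sw ^+ 2 * a0 ^+ 2 * W ^+ 2) - be * P ^+ 2 * W ^+ 2
   + (- (a0 * w0 * P)) * (be * W ^+ 2 + ga * Sw ^+ 2).
  rewrite -hw; ring.
rewrite E.
have hb0 : 0 <= be by exact: ltW.
have hg0 : 0 <= ga by exact: ltW.
have h3 := mulr_ge0 (mulr_ge0 (mulr_ge0 hg0 (sqr_ge0 Sw)) (sqr_ge0 a0)) (sqr_ge0 W).
have h4 := mulr_ge0 (mulr_ge0 hb0 (sqr_ge0 P)) (sqr_ge0 W).
have h5 := addr_ge0 (mulr_ge0 hb0 (sqr_ge0 W)) (mulr_ge0 hg0 (sqr_ge0 Sw)).
have h6 : (- (a0 * w0 * P)) * (be * W ^+ 2 + ga * Sw ^+ 2) <= (A * W * Sa * Sw) * (be * W ^+ 2 + ga * Sw ^+ 2).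
  by rewrite ler_wpM2r.
have h7 : (A * W * Sa * Sw) * (be * W ^+ 2 + ga * Sw ^+ 2) <= (A * W * Sa * Sw) * ((be + ga) * W ^+ 2).
  by rewrite ler_wpM2l // mulrDl lerD2l ler_wpM2l //.
have E2 : (A * W * Sa * Sw) * ((be + ga) * W ^+ 2) = (be + ga) * Sa * A * W ^+ 3 * Sw by ring.
lra.
Qed.

Lemma final_ineq (R : realType) (a0 w0 P Sa Sw N al be ga c : R) :
  a0 != 0 -> w0 != 0 -> 0 < Sw -> Sw / `|w0| <= 1 -> 0 <= Sa ->
  P ^+ 2 <= Sa ^+ 2 * Sw ^+ 2 -> 0 < N -> 0 < al -> 0 < be -> 0 < ga ->
  c = al * N * (a0 * w0 + P) / (`|a0| ^+ 2 + Sa ^+ 2) ->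
  Sw * (- (`|w0| ^+ 2)^-1 * ((2 * `|w0|)^-1 * (2 * w0 * ((c * a0 + N * w0) * ga))))
  + `|w0|^-1 * ((2 * Sw)^-1 * (- (2 * be) * (c * P + N * Sw ^+ 2)))
  <= - (be + ga) * N * (Sw / `|w0|) + al * (be + ga) * N * ((Sa / `|a0|) / (1 + (Sa / `|a0|) ^+ 2)).
Proof.
move=> a00 w00 S0 r1 Sa0 hP N0 al0 be0 ga0 hc.
set A := `|a0| in hc *; set W := `|w0|.
have W0 : 0 < W by rewrite normr_gt0.
have A0 : 0 < A by rewrite normr_gt0.
have SW : Sw <= W by move: r1; rewrite ler_pdivrMr // mul1r.
have hw : w0 ^+ 2 = W ^+ 2 by rewrite /W real_normK ?num_real.
have ha : a0 ^+ 2 = A ^+ 2 by rewrite /A real_normK ?num_real.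
have hpoly := @poly_ineq _ a0 w0 P A W Sa Sw be ga W0 S0 SW (ltW A0) Sa0 hw ha hP be0 ga0.
have e0 : 0 < A ^+ 2 + Sa ^+ 2 by apply: ltr_wpDr; [exact: sqr_ge0 | exact: exprn_gt0].
set K := al * N / ((A ^+ 2 + Sa ^+ 2) * (W ^+ 3 * Sw)).
have K0 : 0 <= K.
  by rewrite /K divr_ge0 // ?mulr_ge0 // ?ltW // exprn_gt0.
rewrite -subr_le0.
clearbody A W.
have -> : Sw * (- (W ^+ 2)^-1 * ((2 * W)^-1 * (2 * w0 * ((c * a0 + N * w0) * ga))))
  + W^-1 * ((2 * Sw)^-1 * (- (2 * be) * (c * P + N * Sw ^+ 2)))
  - (- (be + ga) * N * (Sw / W) + al * (be + ga) * N * ((Sa / A) / (1 + (Sa / A) ^+ 2)))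
  = K * (- ((a0 * w0 + P) * (ga * Sw ^+ 2 * a0 * w0 + be * P * W ^+ 2))
          - (be + ga) * Sa * A * W ^+ 3 * Sw)
    + ga * N * Sw ^+ 2 * (W ^+ 2 - w0 ^+ 2) / (W ^+ 3 * Sw).
  rewrite hc /K; field.
  by rewrite !gt_eqF.
rewrite hw subrr mulr0 mul0r addr0.
by apply: mulr_ge0_le0 K0 _; rewrite subr_le0.
Qed.

Lemma cauchy_schwarz (R : realType) m (f g : 'I_m -> R) :
  0 < \sum_i g i ^+ 2 ->
  (\sum_i f i * g i) ^+ 2 <= (\sum_i f i ^+ 2) * (\sum_i g i ^+ 2).
Proof.
move=> Sg0.
set Sf := \sum_i f i ^+ 2; set Sg := \sum_i g i ^+ 2; set Sfg := \sum_i f i * g i.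
set tau := Sfg / Sg.
have H : 0 <= \sum_i (f i - tau * g i) ^+ 2 by apply: sumr_ge0 => i _; exact: sqr_ge0.
have E : \sum_i (f i - tau * g i) ^+ 2 = Sf - 2 * tau * Sfg + tau ^+ 2 * Sg.
  rewrite (eq_bigr (fun i => f i ^+ 2 - 2 * tau * (f i * g i) + tau ^+ 2 * g i ^+ 2)); last first.
    by move=> i _; ring.
  by rewrite big_split /= sumrB -!mulr_sumr.
have E2 : Sf - 2 * tau * Sfg + tau ^+ 2 * Sg = (Sf * Sg - Sfg ^+ 2) / Sg.
  by rewrite /tau; field; rewrite gt_eqF.
move: H; rewrite E E2 pmulr_lge0 ?invr_gt0 // subr_ge0.
by rewrite mulrC.
Qed.

Lemma sq_pos (R : realType) (z : R) : z != 0 -> 0 < z ^+ 2.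
Proof. by move=> z0; rewrite lt_def sqr_ge0 andbT sqrf_eq0. Qed.

Theorem lemma7p7 (R : realType) (n : nat) (hn : (0 < n)%N)
  (al ga be r0 T0 : R)
  (hal : 0 < al < 1) (hga : 0 < ga) (hbe : 0 < be) (hr0 : 0 < r0)
  (hT0 : 0 <= T0)
  (x v : R -> 'rV[R]_n.+1)
  (hY : forall s, 0 <= s <= T0 -> enorm (x s) < r0)
  (hx : forall s, 0 <= s <= T0 -> is_derive s 1 x (vfield al ga be (x s)))
  (hv : forall s, 0 <= s <= T0 ->
          is_derive s 1 v ('D_(v s) (vfield al ga be) (x s)))
  (t : R) (ht : 0 <= t <= T0)
  (hxu : ucomp (x t) != 0) (hvu : ucomp (v t) != 0)
  (hrho : tan_ang (v t) <= 1) :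
  (snorm (v t) != 0 -> derivable (fun s => tan_ang (v s)) t 1) /\
  (forall D : R, is_derive t 1 (fun s => tan_ang (v s)) D ->
     D <= - (be + ga) * enorm (x t) `^ al * tan_ang (v t)
          + al * (be + ga) * enorm (x t) `^ al
            * (tan_ang (x t) / (1 + tan_ang (x t) ^+ 2))).
Proof.
have hvt := hv t ht.
set a := x t in hvt hxu *; set w := v t in hvt hvu hrho *.
have suma : 0 < \sum_i a ord0 i ^+ 2.
  rewrite big_ord_recl; apply: ltr_pwDl; first exact: sq_pos.
  by apply: sumr_ge0 => i _; exact: sqr_ge0.
have ea : 0 < enorm a by rewrite /enorm sqrtr_gt0.
rewrite D_vfield // in hvt.
set c := (al * _ * _) in hvt.
set N := enorm a `^ al in hvt *.
have hco j : is_derive t 1 (fun s => v s ord0 j)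
    ((c * a ord0 j + N * w ord0 j) * (if j == ord0 then ga else - be)).
  have := @is_derive_coord _ _ _ _ _ j hvt.
  by rewrite mxE [in X in X + _]mxE [in X in _ + X]mxE !AmxE mulrDl !mulrA.
have hu : is_derive t 1 (fun s => v s ord0 ord0) ((c * a ord0 ord0 + N * w ord0 ord0) * ga).
  by have := hco ord0; rewrite eqxx.
have hs i : is_derive t 1 (fun s => v s ord0 (lift ord0 i)) ((c * a ord0 (lift ord0 i) + N * w ord0 (lift ord0 i)) * - be).
  by have := hco (lift ord0 i); rewrite lift_eqF.
have tan_ge0 y : 0 <= tan_ang y by rewrite /tan_ang divr_ge0 // /snorm sqrtr_ge0.
have N0 : 0 < N by rewrite /N powR_gt0.
have hbg : 0 < be + ga by rewrite addr_gt0.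
have al0 : 0 <= al by case/andP: hal => /ltW.
have RHS0 : 0 <= al * (be + ga) * N * (tan_ang a / (1 + tan_ang a ^+ 2)).
  exact: (mulr_ge0 (mulr_ge0 (mulr_ge0 al0 (ltW hbg)) (ltW N0))
    (divr_ge0 (tan_ge0 _ _ a) (addr_ge0 ler01 (sqr_ge0 _)))).
have [Sw0|SwN0] := eqVneq (snorm w) 0.
  have T0w : tan_ang w = 0 by rewrite /tan_ang Sw0 mul0r.
  split => // D hD.
  rewrite T0w mulr0 add0r.
  apply: le_trans RHS0.
  apply: (@deriv_min_le0 _ _ _ _ hD) => s /=.
  by rewrite -/w T0w tan_ge0.
set Q := \sum_(i < n) w ord0 (lift ord0 i) ^+ 2.
have hf1 := @sum_sq_derive _ _ (fun i s => v s ord0 (lift ord0 i)) _ t hs.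
have Q0 : 0 <= Q by apply: sumr_ge0 => i _; exact: sqr_ge0.
have Qpos : 0 < Q.
  rewrite lt_def Q0 andbT; apply: contra SwN0 => /eqP Q00.
  by rewrite /snorm -/w -/Q Q00 sqrtr0.
have hS := @is_derive_sqrt_comp _ _ _ _ hf1 Qpos.
have hu2 := @sq_derive _ _ _ _ hu.
have hU := @is_derive_sqrt_comp _ _ _ _ hu2 (@sq_pos _ _ hvu).
have hUn : Num.sqrt (v t ord0 ord0 ^+ 2) != 0.
  by rewrite sqrtr_sqr normr_eq0.
have hUi := @is_deriveV _ (fun s => Num.sqrt (v s ord0 ord0 ^+ 2)) t _ _ hUn hU.
have hT := is_deriveM hS hUi.
have E : ((fun s => Num.sqrt (\sum_i v s ord0 (lift ord0 i) ^+ 2)) *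
          (fun s => (Num.sqrt (v s ord0 ord0 ^+ 2))^-1)) = (fun s => tan_ang (v s)).
  by apply/funext => s /=; rewrite /tan_ang /snorm /ucomp -sqrtr_sqr.
rewrite E in hT.
split; first by move=> _; exact: (@ex_derive _ _ _ _ _ _ _ hT).
move=> D hD.
have -> : D = 'D_1 (fun s => tan_ang (v s)) t by rewrite (@derive_val _ _ _ _ _ _ _ hD).
rewrite (@derive_val _ _ _ _ _ _ _ hT) /=.
rewrite -/w -/Q sqrtr_sqr.
set a0 := a ord0 ord0; set w0 := w ord0 ord0.
set P := \sum_(i < n) a ord0 (lift ord0 i) * w ord0 (lift ord0 i).
set Sw := Num.sqrt Q; set Sa := snorm a.
have SwQ : Sw ^+ 2 = Q by rewrite sqr_sqrtr.
have Sa0 : 0 <= Sa by rewrite sqrtr_ge0.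
have Sapos : 0 <= \sum_(i < n) a ord0 (lift ord0 i) ^+ 2.
  by apply: sumr_ge0 => i _; exact: sqr_ge0.
have SaQ : Sa ^+ 2 = \sum_(i < n) a ord0 (lift ord0 i) ^+ 2 by rewrite sqr_sqrtr.
have hsum : \sum_(i < n) 2 * w ord0 (lift ord0 i) *
      ((c * a ord0 (lift ord0 i) + N * w ord0 (lift ord0 i)) * - be)
    = - (2 * be) * (c * P + N * Sw ^+ 2).
  rewrite SwQ /Q /P.
  rewrite (eq_bigr (fun i => - (2 * be) * (c * (a ord0 (lift ord0 i) * w ord0 (lift ord0 i))
       + N * w ord0 (lift ord0 i) ^+ 2))); last by move=> i _; ring.
  by rewrite -mulr_sumr big_split /= -!mulr_sumr.
rewrite hsum.
have htw : tan_ang w = Sw / `|w0| by [].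
have hta : tan_ang a = Sa / `|a0| by [].
rewrite htw hta.
have he1 : enorm a `^ (al - 1) = N / enorm a.
  rewrite powRB; last by rewrite (gt_eqF ea) implybT.
  by rewrite powRr1 // ltW.
have hsumaw : \sum_i 2 * a ord0 i * w ord0 i = 2 * (a0 * w0 + P).
  rewrite big_ord_recl /P mulrDr mulr_sumr mulrA; congr (_ + _).
  by apply: eq_bigr => i _; rewrite mulrA.
have he2 : enorm a ^+ 2 = `|a0| ^+ 2 + Sa ^+ 2.
  rewrite /enorm sqr_sqrtr ?ltW // big_ord_recl SaQ real_normK ?num_real //.
have hc : c = al * N * (a0 * w0 + P) / (`|a0| ^+ 2 + Sa ^+ 2).
  rewrite /c he1 hsumaw -he2; field; by rewrite gt_eqF.
have hP : P ^+ 2 <= Sa ^+ 2 * Sw ^+ 2.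
  rewrite SaQ SwQ; exact: cauchy_schwarz.
have Sw0 : 0 < Sw by rewrite sqrtr_gt0.
have r1 : Sw / `|w0| <= 1 by rewrite -htw.
have al0' : 0 < al by case/andP: hal.
exact: (@final_ineq _ a0 w0 P Sa Sw N al be ga c hxu hvu Sw0 r1 Sa0 hP N0 al0' hbe hga hc).
Qed.
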